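(* For each critical poset $\mathcal S$ and each pair $\lambda\neq\mu$ of complex numbers, the subspace representations $\mathcal V_\lambda(\mathcal S)$ and $\mathcal V_\mu(\mathcal S)$ are not equivalent. Moreover, for each critical poset $\mathcal S$, the subspace representation $\mathcal V(\mathcal S_a)$ is schurian.
   Context: A subspace representation of a finite poset $\mathcal P$ is a tuple $(V;V_i)_{i\in\mathcal P}$ of a finite-dimensional complex space $V$ and subspaces with $V_i\subseteq V_j$ whenever $i\prec j$; two such are equivalent if a linear bijection $g$ between the spaces satisfies $g(V_i)=W_i$ for all $i$. It is schurian if $\{g\in\mathrm{End}(V): g(V_i)\subseteq V_i\ \forall i\}=\mathbb C\cdot\mathrm{id}$. The poset $(t_1,\dots,t_s)$ is the disjoint union of incomparable chains of sizes $t_i$; $N$ has elements $a_1,a_2,b_1,b_2$ with exactly $a_1\prec b_1,a_2\prec b_1,a_2\prec b_2$; $(N,4)$ is the disjoint union of $N$ and a 4-chain. The critical posets are $(1,1,1,1),(2,2,2),(1,3,3),(1,2,5),(N,4)$. Let $e_i$ be the standard basis vectors of $\mathbb C^n$, $e_{i_1\dots i_k}=e_{i_1}+\dots+e_{i_k}$, and $\langle\cdots\rangle$ the span. For $\lambda\in\mathbb C$ define $\mathcal V_\lambda(\mathcal S)$ as follows (chains listed bottom to top): $(1,1,1,1)$: $V=\mathbb C^2$, subspaces $\langle e_1\rangle,\langle e_2\rangle,\langle e_1+e_2\rangle,\langle e_1+\lambda e_2\rangle$. $(2,2,2)$: $V=\mathbb C^3$, chains $\langle e_{123}\rangle\subset\langle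 e_{123},e_1+\lambda e_3\rangle$; $\langle e_1\rangle\subset\langle e_1,e_2\rangle$; $\langle e_3\rangle\subset\langle e_2,e_3\rangle$. $(1,3,3)$: $V=\mathbb C^4$, single element $\langle e_{123},e_{24}\rangle$; chains $\langle e_4\rangle\subset\langle e_1,e_4\rangle\subset\langle e_1,e_4,e_2+\lambda e_3\rangle$; $\langle e_3\rangle\subset\langle e_2,e_3\rangle\subset\langle e_1,e_2,e_3\rangle$. $(1,2,5)$: $V=\mathbb C^6$, single element $\langle e_{123},e_{245},e_{16}\rangle$; chain $\langle e_5,e_6\rangle\subset\langle e_1,e_2,e_5,e_6\rangle$; chain $\langle e_4\rangle\subset\langle e_3,e_4\rangle\subset\langle e_2,e_3,e_4\rangle\subset\langle e_1,e_2,e_3,e_4\rangle\subset\langle e_1,e_2,e_3,e_4,e_5+\lambda e_6\rangle$. $(N,4)$: $V=\mathbb C^5$, 4-chain $\langle e_4\rangle\subset\langle e_3,e_4\rangle\subset\langle e_2,e_3,e_4\rangle\subset\langle e_1,e_2,e_3,e_4\rangle$; on $N$: $a_1\mapsto\langle e_{235},e_{134}\rangle$, $a_2\mapsto\langle e_5\rangle$, $b_1\mapsto\langle e_{235},e_{134},e_5,e_3+\lambda e_4\rangle$, $b_2\mapsto\langle e_1,e_2,e_5\rangle$. In each case let $a\in\mathcal S$ be the unique element whose subspace depends on $\lambda$, $\mathcal S_a=\mathcal S\setminus\{a\}$ (with induced order), and $\mathcal V(\mathcal S_a)$ the subspace representation of $\mathcal S_a$ obtained from $\mathcal V_\lambda(\mathcal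 S)$ by deleting the subspace at $a$. *)

(* Defs.v *)
(* Complex numbers are modelled as R[i] = complex R for an
   arbitrary R : realType (a complete archimedean ordered field, i.e. the reals). *)
From HB Require Import structures.
From mathcomp Require Import all_boot all_order all_algebra.
From mathcomp Require Import reals.
From mathcomp Require Import complex.
Set Implicit Arguments. Unset Strict Implicit. Unset Printing Implicit Defensive.
Import Order.TTheory GRing.Theory Num.Theory.
Local Open Scope ring_scope.

(* A subspace of F^n is represented by the row space of a square matrix;
   linear maps act on row vectors: g(U) is the row space of U *m g. *)
Section General.
Variable F : fieldType.

Definition span n (s : seq 'rV[F]_n) : 'M[F]_n := (\sum_(v <- s) <<v>>)%MS.

(* standard basis vector e_i of F^n, 1-indexed as in the paper *)
Definition ev n (i : nat) : 'rV[F]_n := \row_(j < n) ((j == i.-1 :> nat)%:R).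

Definition evs n (s : seq nat) : 'rV[F]_n := \sum_(i <- s) ev n i.

Definition is_subspace_rep (P : Type) (le : rel P) n (V : P -> 'M[F]_n) :=
  forall i j, le i j -> (V i <= V j)%MS.

Definition rep_equiv (P : Type) n m (V : P -> 'M[F]_n) (W : P -> 'M[F]_m) :=
  exists g : 'M[F]_(n, m),
    [/\ row_free g, row_full g & forall i, (V i *m g == W i)%MS].

Definition schurian (P : Type) n (V : P -> 'M[F]_n) :=
  forall g : 'M[F]_n, (forall i, (V i *m g <= V i)%MS) <-> exists c : F, g = c%:M.

End General.

Inductive critical := C1111 | C222 | C133 | C125 | CN4.

Definition csize (S : critical) : nat :=
  match S with C1111 => 4 | C222 => 6 | C133 => 7 | C125 => 8 | CN4 => 8 end%N.

Definition cdim (S : critical) : nat :=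
  match S with C1111 => 2 | C222 => 3 | C133 => 4 | C125 => 6 | CN4 => 5 end%N.

(* Enumeration of elements (chains listed bottom to top):
   (1,1,1,1): 0,1,2,3                         (a = 3)
   (2,2,2)  : chain 0<1, chain 2<3, chain 4<5 (a = 1)
   (1,3,3)  : single 0, chain 1<2<3, chain 4<5<6 (a = 3)
   (1,2,5)  : single 0, chain 1<2, chain 3<4<5<6<7 (a = 7)
   (N,4)    : 4-chain 0<1<2<3, a1 = 4, a2 = 5, b1 = 6, b2 = 7 (a = 6 = b1) *)
Definition crel (S : critical) (i j : nat) : bool :=
  match S with
  | C1111 => false
  | C222 => [|| (i, j) == (0, 1), (i, j) == (2, 3) | (i, j) == (4, 5)]
  | C133 => [|| [&& 1 <= i, i < j & j <= 3] | [&& 4 <= i, i < j & j <= 6]]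
  | C125 => [|| (i, j) == (1, 2) | [&& 3 <= i, i < j & j <= 7]]
  | CN4 => [|| [&& i < j & j <= 3], (i, j) == (4, 6), (i, j) == (5, 6)
              | (i, j) == (5, 7)]
  end%N.

Definition cle (S : critical) : rel 'I_(csize S) :=
  fun i j => crel S i j.

Definition ca (S : critical) : nat :=
  match S with C1111 => 3 | C222 => 1 | C133 => 3 | C125 => 7 | CN4 => 6 end%N.

Section Reps.
Variable R : realType.
Local Notation C := R[i].

Local Notation e n i := (@ev C n i).
Local Notation E n s := (@evs C n s).
Local Notation sp n s := (@span C n s).

Definition V1111 (l : C) : seq 'M[C]_2 :=
  [:: sp 2 [:: e 2 1]; sp 2 [:: e 2 2]; sp 2 [:: e 2 1 + e 2 2];
      sp 2 [:: e 2 1 + l *: e 2 2]].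
Definition V222 (l : C) : seq 'M[C]_3 :=
  [:: sp 3 [:: E 3 [:: 1; 2; 3]%N];
      sp 3 [:: E 3 [:: 1; 2; 3]%N; e 3 1 + l *: e 3 3];
      sp 3 [:: e 3 1]; sp 3 [:: e 3 1; e 3 2];
      sp 3 [:: e 3 3]; sp 3 [:: e 3 2; e 3 3]].
Definition V133 (l : C) : seq 'M[C]_4 :=
  [:: sp 4 [:: E 4 [:: 1; 2; 3]%N; E 4 [:: 2; 4]%N];
      sp 4 [:: e 4 4]; sp 4 [:: e 4 1; e 4 4];
      sp 4 [:: e 4 1; e 4 4; e 4 2 + l *: e 4 3];
      sp 4 [:: e 4 3]; sp 4 [:: e 4 2; e 4 3]; sp 4 [:: e 4 1; e 4 2; e 4 3]].
Definition V125 (l : C) : seq 'M[C]_6 :=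
  [:: sp 6 [:: E 6 [:: 1; 2; 3]%N; E 6 [:: 2; 4; 5]%N; E 6 [:: 1; 6]%N];
      sp 6 [:: e 6 5; e 6 6]; sp 6 [:: e 6 1; e 6 2; e 6 5; e 6 6];
      sp 6 [:: e 6 4]; sp 6 [:: e 6 3; e 6 4]; sp 6 [:: e 6 2; e 6 3; e 6 4];
      sp 6 [:: e 6 1; e 6 2; e 6 3; e 6 4];
      sp 6 [:: e 6 1; e 6 2; e 6 3; e 6 4; e 6 5 + l *: e 6 6]].
Definition VN4 (l : C) : seq 'M[C]_5 :=
  [:: sp 5 [:: e 5 4]; sp 5 [:: e 5 3; e 5 4]; sp 5 [:: e 5 2; e 5 3; e 5 4];
      sp 5 [:: e 5 1; e 5 2; e 5 3; e 5 4];
      sp 5 [:: E 5 [:: 2; 3; 5]%N; E 5 [:: 1; 3; 4]%N];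
      sp 5 [:: e 5 5];
      sp 5 [:: E 5 [:: 2; 3; 5]%N; E 5 [:: 1; 3; 4]%N; e 5 5; e 5 3 + l *: e 5 4];
      sp 5 [:: e 5 1; e 5 2; e 5 5]].

Definition critVs (S : critical) (l : C) : seq 'M[C]_(cdim S) :=
  match S return seq 'M[C]_(cdim S) with
  | C1111 => V1111 l | C222 => V222 l | C133 => V133 l
  | C125 => V125 l | CN4 => VN4 l
  end.

Definition critV (S : critical) (l : C) : 'I_(csize S) -> 'M[C]_(cdim S) :=
  fun i => nth 0 (critVs S l) i.
Arguments critV S l i : clear implicits.

(* V(S_a): the representation of S \ {a} obtained by deleting the subspace at a
   (it does not depend on l) *)
Definition critVa (S : critical) (l : C) :
    {i : 'I_(csize S) | (i : nat) != ca S} -> 'M[C]_(cdim S) :=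
  fun i => @critV S l (val i).

End Reps.
Arguments critV {R} S l i.
Arguments critVa {R} S l i.

(* Main.v *)
Require Import Defs.
From HB Require Import structures.
From mathcomp Require Import all_boot all_order all_algebra.
From mathcomp Require Import reals complex.
From mathcomp Require Import ring.
Set Implicit Arguments. Unset Strict Implicit. Unset Printing Implicit Defensive.
Import Order.TTheory GRing.Theory Num.Theory.
Local Open Scope ring_scope.

Section S.
Variable R : realType.
Local Notation C := R[i].

Definition rowf n (f : nat -> C) : 'rV[C]_n := \row_(j < n) f j.
Definition colf n (f : nat -> C) : 'cV[C]_n := \col_(j < n) f j.
Definition gx n (g : 'M[C]_n.+1) (i j : nat) := g (inord i) (inord j).

Lemma ev_rowf n k : @ev C n k = rowf n (fun j => (j == k.-1)%:R).
Proof. by apply/rowP => j; rewrite !mxE. Qed.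

Lemma rowfD n f h : rowf n f + rowf n h = rowf n (fun j => f j + h j).
Proof. by apply/rowP => j; rewrite !mxE. Qed.

Lemma rowfZ n a f : a *: rowf n f = rowf n (fun j => a * f j).
Proof. by apply/rowP => j; rewrite !mxE. Qed.

Lemma evs_rowf n s : @evs C n s = rowf n (fun j => \sum_(i <- s) (j == i.-1)%:R).
Proof.
rewrite /evs; elim: s => [|a s IH]; first by apply/rowP => j; rewrite /rowf !big_nil !mxE big_nil.
by rewrite big_cons IH ev_rowf rowfD; apply/rowP => j; rewrite !mxE big_cons.
Qed.

Lemma rowf_eq n f h : (forall j, (j < n)%N -> f j = h j) -> rowf n f = rowf n h.
Proof. by move=> H; apply/rowP => j; rewrite !mxE H. Qed.


Lemma iotaE n : iota 0 n = index_iota 0 n.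
Proof. by rewrite /index_iota subn0. Qed.

Lemma rowf_mul0 n f h : \sum_(j <- iota 0 n) f j * h j = 0 -> rowf n f *m colf n h = 0.
Proof.
move=> H; apply/matrixP => i k; rewrite !ord1 [RHS]mxE -H mxE.
rewrite iotaE big_mkord; apply: eq_bigr => j _; rewrite !mxE //.
Qed.

Lemma span_ker n (t : seq 'rV[C]_n) (w : 'cV[C]_n) :
  (forall k, (k < size t)%N -> nth 0 t k *m w = 0) -> (Defs.span t <= kermx w)%MS.
Proof.
rewrite /Defs.span; elim: t => [|u t IH] H; first by rewrite big_nil sub0mx.
rewrite big_cons addsmx_sub; apply/andP; split.
  by rewrite genmxE; apply/sub_kermxP; exact: (H 0%N).
by apply: IH => k Hk; exact: (H k.+1).
Qed.

Lemma in_span n (s : seq 'rV[C]_n) k : (k < size s)%N -> (nth 0 s k <= Defs.span s)%MS.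
Proof.
rewrite /Defs.span; elim: s k => [|u s IH] [|k] //= Hk; rewrite big_cons.
  by rewrite -{1}(genmxE u) addsmxSl.
by apply: submx_trans (IH _ Hk) _; rewrite addsmxSr.
Qed.

Lemma key n (g : 'M[C]_n.+1) s t k vf wf :
  (Defs.span s *m g <= Defs.span t)%MS -> (k < size s)%N -> nth 0 s k = rowf _ vf ->
  (forall k, (k < size t)%N -> nth 0 t k *m colf _ wf = 0) ->
  \sum_(j <- iota 0 n.+1) (\sum_(i <- iota 0 n.+1) vf i * gx g i j) * wf j = 0.
Proof.
move=> Hg Hk Hv Ht.
have H1 : (rowf _ vf *m g <= kermx (colf _ wf))%MS.
  apply: submx_trans (span_ker Ht); apply: submx_trans Hg.
  by apply: submxMr; rewrite -Hv in_span.
have E : (rowf _ vf *m g *m colf _ wf) 0 0 = 0 by rewrite (sub_kermxP H1) mxE.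
apply: (etrans _ E); symmetry.
rewrite mxE iotaE big_mkord; apply: eq_bigr => j _; rewrite !mxE; congr (_ * _).
rewrite big_mkord; apply: eq_bigr => i _; rewrite !mxE /gx !inord_val //.
Qed.


Lemma zero_eq (P Q : C) : Q = 0 -> P = Q -> P = 0.
Proof. by move=> -> . Qed.

Ltac enum tac :=
  let rec go := (let j := fresh "j" in case=> [|j]; [move=> _; tac | move: j; first [by move=> j; rewrite !ltnS ltn0 | go]]) in go.

Ltac sideV := (rewrite /= ?(ev_rowf, evs_rowf, rowfD, rowfZ); apply: rowf_eq;
   enum ltac:(rewrite /= ?big_cons ?big_nil /=; ring)).
Ltac sideW := (enum ltac:(rewrite /= ?(ev_rowf, evs_rowf, rowfD, rowfZ); apply: rowf_mul0;
      rewrite /= ?big_cons ?big_nil /=; ring)).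
Lemma step (c x t : C) : x = 0 -> t - c * x = 0 -> t = 0.
Proof. by move=> -> ; rewrite mulr0 subr0. Qed.

Lemma scal_of n (g : 'M[C]_n.+1) c :
  (forall i, (i < n.+1)%N -> forall j, (j < n.+1)%N -> gx g i j = (i == j)%:R * c) -> g = c%:M.
Proof.
move=> H; apply/matrixP => i j; rewrite mxE.
have := H i (ltn_ord i) j (ltn_ord j); rewrite /gx !inord_val => ->.
by rewrite mulr_natl.
Qed.

Lemma final n (g : 'M[C]_n.+1) (c l m : C) : l != m -> g \in unitmx ->
  (forall i, (i < n.+1)%N -> forall j, (j < n.+1)%N -> gx g i j = (i == j)%:R * c) ->
  c * (m - l) = 0 -> False.
Proof.
move=> lm gu /scal_of Hg /eqP; rewrite mulf_eq0 subr_eq0 => /orP [/eqP c0|/eqP ml].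
  by move: gu; rewrite Hg c0 unitmxE det_scalar expr0n /= unitr0.
by move: lm; rewrite ml eqxx.
Qed.


Lemma pres1111 (l m : C) (g : 'M[C]_2) :
  (forall i : 'I_(csize C1111), (i : nat) != ca C1111 -> (critV C1111 l i *m g <= critV C1111 m i)%MS) ->
  forall i, (i < 2)%N -> forall j, (j < 2)%N -> gx g i j = (i == j)%:R * gx g 0 0.
Proof.
move=> H.
have E0 : 0 + gx g 0 1 = 0.
  refine (zero_eq (@key 1 g _ _ 0 (nth 0 [:: 1; 0]) (nth 0 [:: 0; 1]) (H (@Ordinal (csize C1111) 0 isT) isT) isT _ _) _);
  [sideV | sideW | rewrite /= !big_cons !big_nil /=; ring].
have E1 : 0 + gx g 1 0 = 0.
  refine (zero_eq (@key 1 g _ _ 0 (nth 0 [:: 0; 1]) (nth 0 [:: 1; 0]) (H (@Ordinal (csize C1111) 1 isT) isT) isT _ _) _);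
  [sideV | sideW | rewrite /= !big_cons !big_nil /=; ring].
have E2 : 0 - gx g 0 0 + gx g 0 1 - gx g 1 0 + gx g 1 1 = 0.
  refine (zero_eq (@key 1 g _ _ 0 (nth 0 [:: 1; 1]) (nth 0 [:: (-1); 1]) (H (@Ordinal (csize C1111) 2 isT) isT) isT _ _) _);
  [sideV | sideW | rewrite /= !big_cons !big_nil /=; ring].
have F01 : gx g 0 1 = 0.
  apply/subr0_eq; apply: (@step 1 _ _ E0); ring.
have F10 : gx g 1 0 = 0.
  apply/subr0_eq; apply: (@step 1 _ _ E1); ring.
have F11 : gx g 1 1 - gx g 0 0 = 0.
  apply/subr0_eq; apply: (@step (-1) _ _ E0); apply: (@step 1 _ _ E1); apply: (@step 1 _ _ E2); ring.
have G1 : gx g 1 1 = gx g 0 0 by apply/subr0_eq.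
move=> i Hi j Hj.
case: i Hi => [|[|i]] Hi; last by move: Hi; rewrite !ltnS ltn0.
all: case: j Hj => [|[|j]] Hj; try by move: Hj; rewrite !ltnS ltn0.
all: rewrite /= ?F01 ?F10 ?G1; ring.
Qed.

Lemma neq1111 (l m : C) (g : 'M[C]_2) : l != m -> g \in unitmx ->
  (forall i : 'I_(csize C1111), (critV C1111 l i *m g <= critV C1111 m i)%MS) -> False.
Proof.
move=> lm gu H.
have [c Pc] : exists c, forall i, (i < 2)%N -> forall j, (j < 2)%N -> gx g i j = (i == j)%:R * c.
  by exists (gx g 0 0); apply: (pres1111 (l := l) (m := m)) => i _; exact: H.
have E : c * (m - l) = 0.
  refine (zero_eq (@key 1 g _ _ 0 (nth 0 [:: 1; l]) (nth 0 [:: m; -1]) (H (@Ordinal (csize C1111) (ca C1111) isT)) isT _ _) _);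
  [sideV | sideW | rewrite /= !big_cons !big_nil /= !Pc //=; ring].
exact: (final lm gu Pc E).
Qed.

Lemma pres222 (l m : C) (g : 'M[C]_3) :
  (forall i : 'I_(csize C222), (i : nat) != ca C222 -> (critV C222 l i *m g <= critV C222 m i)%MS) ->
  forall i, (i < 3)%N -> forall j, (j < 3)%N -> gx g i j = (i == j)%:R * gx g 0 0.
Proof.
move=> H.
have E0 : 0 - gx g 0 0 + gx g 0 1 - gx g 1 0 + gx g 1 1 - gx g 2 0 + gx g 2 1 = 0.
  refine (zero_eq (@key 2 g _ _ 0 (nth 0 [:: 1; 1; 1]) (nth 0 [:: (-1); 1; 0]) (H (@Ordinal (csize C222) 0 isT) isT) isT _ _) _);
  [sideV | sideW | rewrite /= !big_cons !big_nil /=; ring].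
have E1 : 0 - gx g 0 0 + gx g 0 2 - gx g 1 0 + gx g 1 2 - gx g 2 0 + gx g 2 2 = 0.
  refine (zero_eq (@key 2 g _ _ 0 (nth 0 [:: 1; 1; 1]) (nth 0 [:: (-1); 0; 1]) (H (@Ordinal (csize C222) 0 isT) isT) isT _ _) _);
  [sideV | sideW | rewrite /= !big_cons !big_nil /=; ring].
have E2 : 0 + gx g 0 1 = 0.
  refine (zero_eq (@key 2 g _ _ 0 (nth 0 [:: 1; 0; 0]) (nth 0 [:: 0; 1; 0]) (H (@Ordinal (csize C222) 2 isT) isT) isT _ _) _);
  [sideV | sideW | rewrite /= !big_cons !big_nil /=; ring].
have E3 : 0 + gx g 0 2 = 0.
  refine (zero_eq (@key 2 g _ _ 0 (nth 0 [:: 1; 0; 0]) (nth 0 [:: 0; 0; 1]) (H (@Ordinal (csize C222) 2 isT) isT) isT _ _) _);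
  [sideV | sideW | rewrite /= !big_cons !big_nil /=; ring].
have E5 : 0 + gx g 1 2 = 0.
  refine (zero_eq (@key 2 g _ _ 1 (nth 0 [:: 0; 1; 0]) (nth 0 [:: 0; 0; 1]) (H (@Ordinal (csize C222) 3 isT) isT) isT _ _) _);
  [sideV | sideW | rewrite /= !big_cons !big_nil /=; ring].
have E6 : 0 + gx g 2 0 = 0.
  refine (zero_eq (@key 2 g _ _ 0 (nth 0 [:: 0; 0; 1]) (nth 0 [:: 1; 0; 0]) (H (@Ordinal (csize C222) 4 isT) isT) isT _ _) _);
  [sideV | sideW | rewrite /= !big_cons !big_nil /=; ring].
have E7 : 0 + gx g 2 1 = 0.
  refine (zero_eq (@key 2 g _ _ 0 (nth 0 [:: 0; 0; 1]) (nth 0 [:: 0; 1; 0]) (H (@Ordinal (csize C222) 4 isT) isT) isT _ _) _);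
  [sideV | sideW | rewrite /= !big_cons !big_nil /=; ring].
have E8 : 0 + gx g 1 0 = 0.
  refine (zero_eq (@key 2 g _ _ 0 (nth 0 [:: 0; 1; 0]) (nth 0 [:: 1; 0; 0]) (H (@Ordinal (csize C222) 5 isT) isT) isT _ _) _);
  [sideV | sideW | rewrite /= !big_cons !big_nil /=; ring].
have F01 : gx g 0 1 = 0.
  apply/subr0_eq; apply: (@step 1 _ _ E2); ring.
have F02 : gx g 0 2 = 0.
  apply/subr0_eq; apply: (@step 1 _ _ E3); ring.
have F10 : gx g 1 0 = 0.
  apply/subr0_eq; apply: (@step 1 _ _ E8); ring.
have F12 : gx g 1 2 = 0.
  apply/subr0_eq; apply: (@step 1 _ _ E5); ring.
have F20 : gx g 2 0 = 0.
  apply/subr0_eq; apply: (@step 1 _ _ E6); ring.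
have F21 : gx g 2 1 = 0.
  apply/subr0_eq; apply: (@step 1 _ _ E7); ring.
have F11 : gx g 1 1 - gx g 0 0 = 0.
  apply/subr0_eq; apply: (@step 1 _ _ E0); apply: (@step (-1) _ _ E2); apply: (@step 1 _ _ E6); apply: (@step (-1) _ _ E7); apply: (@step 1 _ _ E8); ring.
have G1 : gx g 1 1 = gx g 0 0 by apply/subr0_eq.
have F22 : gx g 2 2 - gx g 0 0 = 0.
  apply/subr0_eq; apply: (@step 1 _ _ E1); apply: (@step (-1) _ _ E3); apply: (@step (-1) _ _ E5); apply: (@step 1 _ _ E6); apply: (@step 1 _ _ E8); ring.
have G2 : gx g 2 2 = gx g 0 0 by apply/subr0_eq.
move=> i Hi j Hj.
case: i Hi => [|[|[|i]]] Hi; last by move: Hi; rewrite !ltnS ltn0.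
all: case: j Hj => [|[|[|j]]] Hj; try by move: Hj; rewrite !ltnS ltn0.
all: rewrite /= ?F01 ?F02 ?F10 ?F12 ?F20 ?F21 ?G1 ?G2; ring.
Qed.

Lemma neq222 (l m : C) (g : 'M[C]_3) : l != m -> g \in unitmx ->
  (forall i : 'I_(csize C222), (critV C222 l i *m g <= critV C222 m i)%MS) -> False.
Proof.
move=> lm gu H.
have [c Pc] : exists c, forall i, (i < 3)%N -> forall j, (j < 3)%N -> gx g i j = (i == j)%:R * c.
  by exists (gx g 0 0); apply: (pres222 (l := l) (m := m)) => i _; exact: H.
have E : c * (m - l) = 0.
  refine (zero_eq (@key 2 g _ _ 1 (nth 0 [:: 1; 0; l]) (nth 0 [:: m; 1 - m; -1]) (H (@Ordinal (csize C222) (ca C222) isT)) isT _ _) _);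
  [sideV | sideW | rewrite /= !big_cons !big_nil /= !Pc //=; ring].
exact: (final lm gu Pc E).
Qed.

Lemma pres133 (l m : C) (g : 'M[C]_4) :
  (forall i : 'I_(csize C133), (i : nat) != ca C133 -> (critV C133 l i *m g <= critV C133 m i)%MS) ->
  forall i, (i < 4)%N -> forall j, (j < 4)%N -> gx g i j = (i == j)%:R * gx g 0 0.
Proof.
move=> H.
have E0 : 0 - gx g 0 0 + gx g 0 2 - gx g 1 0 + gx g 1 2 - gx g 2 0 + gx g 2 2 = 0.
  refine (zero_eq (@key 3 g _ _ 0 (nth 0 [:: 1; 1; 1; 0]) (nth 0 [:: (-1); 0; 1; 0]) (H (@Ordinal (csize C133) 0 isT) isT) isT _ _) _);
  [sideV | sideW | rewrite /= !big_cons !big_nil /=; ring].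
have E1 : 0 + gx g 0 0 - gx g 0 1 + gx g 0 3 + gx g 1 0 - gx g 1 1 + gx g 1 3 + gx g 2 0 - gx g 2 1 + gx g 2 3 = 0.
  refine (zero_eq (@key 3 g _ _ 0 (nth 0 [:: 1; 1; 1; 0]) (nth 0 [:: 1; (-1); 0; 1]) (H (@Ordinal (csize C133) 0 isT) isT) isT _ _) _);
  [sideV | sideW | rewrite /= !big_cons !big_nil /=; ring].
have E2 : 0 - gx g 1 0 + gx g 1 2 - gx g 3 0 + gx g 3 2 = 0.
  refine (zero_eq (@key 3 g _ _ 1 (nth 0 [:: 0; 1; 0; 1]) (nth 0 [:: (-1); 0; 1; 0]) (H (@Ordinal (csize C133) 0 isT) isT) isT _ _) _);
  [sideV | sideW | rewrite /= !big_cons !big_nil /=; ring].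
have E3 : 0 + gx g 1 0 - gx g 1 1 + gx g 1 3 + gx g 3 0 - gx g 3 1 + gx g 3 3 = 0.
  refine (zero_eq (@key 3 g _ _ 1 (nth 0 [:: 0; 1; 0; 1]) (nth 0 [:: 1; (-1); 0; 1]) (H (@Ordinal (csize C133) 0 isT) isT) isT _ _) _);
  [sideV | sideW | rewrite /= !big_cons !big_nil /=; ring].
have E4 : 0 + gx g 3 0 = 0.
  refine (zero_eq (@key 3 g _ _ 0 (nth 0 [:: 0; 0; 0; 1]) (nth 0 [:: 1; 0; 0; 0]) (H (@Ordinal (csize C133) 1 isT) isT) isT _ _) _);
  [sideV | sideW | rewrite /= !big_cons !big_nil /=; ring].
have E5 : 0 + gx g 3 1 = 0.
  refine (zero_eq (@key 3 g _ _ 0 (nth 0 [:: 0; 0; 0; 1]) (nth 0 [:: 0; 1; 0; 0]) (H (@Ordinal (csize C133) 1 isT) isT) isT _ _) _);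
  [sideV | sideW | rewrite /= !big_cons !big_nil /=; ring].
have E6 : 0 + gx g 3 2 = 0.
  refine (zero_eq (@key 3 g _ _ 0 (nth 0 [:: 0; 0; 0; 1]) (nth 0 [:: 0; 0; 1; 0]) (H (@Ordinal (csize C133) 1 isT) isT) isT _ _) _);
  [sideV | sideW | rewrite /= !big_cons !big_nil /=; ring].
have E7 : 0 + gx g 0 1 = 0.
  refine (zero_eq (@key 3 g _ _ 0 (nth 0 [:: 1; 0; 0; 0]) (nth 0 [:: 0; 1; 0; 0]) (H (@Ordinal (csize C133) 2 isT) isT) isT _ _) _);
  [sideV | sideW | rewrite /= !big_cons !big_nil /=; ring].
have E8 : 0 + gx g 0 2 = 0.
  refine (zero_eq (@key 3 g _ _ 0 (nth 0 [:: 1; 0; 0; 0]) (nth 0 [:: 0; 0; 1; 0]) (H (@Ordinal (csize C133) 2 isT) isT) isT _ _) _);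
  [sideV | sideW | rewrite /= !big_cons !big_nil /=; ring].
have E11 : 0 + gx g 2 0 = 0.
  refine (zero_eq (@key 3 g _ _ 0 (nth 0 [:: 0; 0; 1; 0]) (nth 0 [:: 1; 0; 0; 0]) (H (@Ordinal (csize C133) 4 isT) isT) isT _ _) _);
  [sideV | sideW | rewrite /= !big_cons !big_nil /=; ring].
have E12 : 0 + gx g 2 1 = 0.
  refine (zero_eq (@key 3 g _ _ 0 (nth 0 [:: 0; 0; 1; 0]) (nth 0 [:: 0; 1; 0; 0]) (H (@Ordinal (csize C133) 4 isT) isT) isT _ _) _);
  [sideV | sideW | rewrite /= !big_cons !big_nil /=; ring].
have E13 : 0 + gx g 2 3 = 0.
  refine (zero_eq (@key 3 g _ _ 0 (nth 0 [:: 0; 0; 1; 0]) (nth 0 [:: 0; 0; 0; 1]) (H (@Ordinal (csize C133) 4 isT) isT) isT _ _) _);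
  [sideV | sideW | rewrite /= !big_cons !big_nil /=; ring].
have E14 : 0 + gx g 1 0 = 0.
  refine (zero_eq (@key 3 g _ _ 0 (nth 0 [:: 0; 1; 0; 0]) (nth 0 [:: 1; 0; 0; 0]) (H (@Ordinal (csize C133) 5 isT) isT) isT _ _) _);
  [sideV | sideW | rewrite /= !big_cons !big_nil /=; ring].
have E15 : 0 + gx g 1 3 = 0.
  refine (zero_eq (@key 3 g _ _ 0 (nth 0 [:: 0; 1; 0; 0]) (nth 0 [:: 0; 0; 0; 1]) (H (@Ordinal (csize C133) 5 isT) isT) isT _ _) _);
  [sideV | sideW | rewrite /= !big_cons !big_nil /=; ring].
have E18 : 0 + gx g 0 3 = 0.
  refine (zero_eq (@key 3 g _ _ 0 (nth 0 [:: 1; 0; 0; 0]) (nth 0 [:: 0; 0; 0; 1]) (H (@Ordinal (csize C133) 6 isT) isT) isT _ _) _);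
  [sideV | sideW | rewrite /= !big_cons !big_nil /=; ring].
have F01 : gx g 0 1 = 0.
  apply/subr0_eq; apply: (@step 1 _ _ E7); ring.
have F02 : gx g 0 2 = 0.
  apply/subr0_eq; apply: (@step 1 _ _ E8); ring.
have F03 : gx g 0 3 = 0.
  apply/subr0_eq; apply: (@step 1 _ _ E18); ring.
have F10 : gx g 1 0 = 0.
  apply/subr0_eq; apply: (@step 1 _ _ E14); ring.
have F12 : gx g 1 2 = 0.
  apply/subr0_eq; apply: (@step 1 _ _ E2); apply: (@step 1 _ _ E4); apply: (@step (-1) _ _ E6); apply: (@step 1 _ _ E14); ring.
have F13 : gx g 1 3 = 0.
  apply/subr0_eq; apply: (@step 1 _ _ E15); ring.
have F20 : gx g 2 0 = 0.
  apply/subr0_eq; apply: (@step 1 _ _ E11); ring.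
have F21 : gx g 2 1 = 0.
  apply/subr0_eq; apply: (@step 1 _ _ E12); ring.
have F23 : gx g 2 3 = 0.
  apply/subr0_eq; apply: (@step 1 _ _ E13); ring.
have F30 : gx g 3 0 = 0.
  apply/subr0_eq; apply: (@step 1 _ _ E4); ring.
have F31 : gx g 3 1 = 0.
  apply/subr0_eq; apply: (@step 1 _ _ E5); ring.
have F32 : gx g 3 2 = 0.
  apply/subr0_eq; apply: (@step 1 _ _ E6); ring.
have F11 : gx g 1 1 - gx g 0 0 = 0.
  apply/subr0_eq; apply: (@step (-1) _ _ E1); apply: (@step (-1) _ _ E7); apply: (@step 1 _ _ E11); apply: (@step (-1) _ _ E12); apply: (@step 1 _ _ E13); apply: (@step 1 _ _ E14); apply: (@step 1 _ _ E15); apply: (@step 1 _ _ E18); ring.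
have G1 : gx g 1 1 = gx g 0 0 by apply/subr0_eq.
have F22 : gx g 2 2 - gx g 0 0 = 0.
  apply/subr0_eq; apply: (@step 1 _ _ E0); apply: (@step (-1) _ _ E2); apply: (@step (-1) _ _ E4); apply: (@step 1 _ _ E6); apply: (@step (-1) _ _ E8); apply: (@step 1 _ _ E11); ring.
have G2 : gx g 2 2 = gx g 0 0 by apply/subr0_eq.
have F33 : gx g 3 3 - gx g 0 0 = 0.
  apply/subr0_eq; apply: (@step (-1) _ _ E1); apply: (@step 1 _ _ E3); apply: (@step (-1) _ _ E4); apply: (@step 1 _ _ E5); apply: (@step (-1) _ _ E7); apply: (@step 1 _ _ E11); apply: (@step (-1) _ _ E12); apply: (@step 1 _ _ E13); apply: (@step 1 _ _ E18); ring.
have G3 : gx g 3 3 = gx g 0 0 by apply/subr0_eq.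
move=> i Hi j Hj.
case: i Hi => [|[|[|[|i]]]] Hi; last by move: Hi; rewrite !ltnS ltn0.
all: case: j Hj => [|[|[|[|j]]]] Hj; try by move: Hj; rewrite !ltnS ltn0.
all: rewrite /= ?F01 ?F02 ?F03 ?F10 ?F12 ?F13 ?F20 ?F21 ?F23 ?F30 ?F31 ?F32 ?G1 ?G2 ?G3; ring.
Qed.

Lemma neq133 (l m : C) (g : 'M[C]_4) : l != m -> g \in unitmx ->
  (forall i : 'I_(csize C133), (critV C133 l i *m g <= critV C133 m i)%MS) -> False.
Proof.
move=> lm gu H.
have [c Pc] : exists c, forall i, (i < 4)%N -> forall j, (j < 4)%N -> gx g i j = (i == j)%:R * c.
  by exists (gx g 0 0); apply: (pres133 (l := l) (m := m)) => i _; exact: H.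
have E : c * (m - l) = 0.
  refine (zero_eq (@key 3 g _ _ 2 (nth 0 [:: 0; 1; l; 0]) (nth 0 [:: 0; m; -1; 0]) (H (@Ordinal (csize C133) (ca C133) isT)) isT _ _) _);
  [sideV | sideW | rewrite /= !big_cons !big_nil /= !Pc //=; ring].
exact: (final lm gu Pc E).
Qed.

Lemma pres125 (l m : C) (g : 'M[C]_6) :
  (forall i : 'I_(csize C125), (i : nat) != ca C125 -> (critV C125 l i *m g <= critV C125 m i)%MS) ->
  forall i, (i < 6)%N -> forall j, (j < 6)%N -> gx g i j = (i == j)%:R * gx g 0 0.
Proof.
move=> H.
have E0 : 0 - gx g 0 1 + gx g 0 2 + gx g 0 3 - gx g 1 1 + gx g 1 2 + gx g 1 3 - gx g 2 1 + gx g 2 2 + gx g 2 3 = 0.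
  refine (zero_eq (@key 5 g _ _ 0 (nth 0 [:: 1; 1; 1; 0; 0; 0]) (nth 0 [:: 0; (-1); 1; 1; 0; 0]) (H (@Ordinal (csize C125) 0 isT) isT) isT _ _) _);
  [sideV | sideW | rewrite /= !big_cons !big_nil /=; ring].
have E1 : 0 - gx g 0 1 + gx g 0 2 + gx g 0 4 - gx g 1 1 + gx g 1 2 + gx g 1 4 - gx g 2 1 + gx g 2 2 + gx g 2 4 = 0.
  refine (zero_eq (@key 5 g _ _ 0 (nth 0 [:: 1; 1; 1; 0; 0; 0]) (nth 0 [:: 0; (-1); 1; 0; 1; 0]) (H (@Ordinal (csize C125) 0 isT) isT) isT _ _) _);
  [sideV | sideW | rewrite /= !big_cons !big_nil /=; ring].
have E2 : 0 - gx g 0 0 + gx g 0 2 + gx g 0 5 - gx g 1 0 + gx g 1 2 + gx g 1 5 - gx g 2 0 + gx g 2 2 + gx g 2 5 = 0.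
  refine (zero_eq (@key 5 g _ _ 0 (nth 0 [:: 1; 1; 1; 0; 0; 0]) (nth 0 [:: (-1); 0; 1; 0; 0; 1]) (H (@Ordinal (csize C125) 0 isT) isT) isT _ _) _);
  [sideV | sideW | rewrite /= !big_cons !big_nil /=; ring].
have E3 : 0 - gx g 1 1 + gx g 1 2 + gx g 1 3 - gx g 3 1 + gx g 3 2 + gx g 3 3 - gx g 4 1 + gx g 4 2 + gx g 4 3 = 0.
  refine (zero_eq (@key 5 g _ _ 1 (nth 0 [:: 0; 1; 0; 1; 1; 0]) (nth 0 [:: 0; (-1); 1; 1; 0; 0]) (H (@Ordinal (csize C125) 0 isT) isT) isT _ _) _);
  [sideV | sideW | rewrite /= !big_cons !big_nil /=; ring].
have E4 : 0 - gx g 1 1 + gx g 1 2 + gx g 1 4 - gx g 3 1 + gx g 3 2 + gx g 3 4 - gx g 4 1 + gx g 4 2 + gx g 4 4 = 0.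
  refine (zero_eq (@key 5 g _ _ 1 (nth 0 [:: 0; 1; 0; 1; 1; 0]) (nth 0 [:: 0; (-1); 1; 0; 1; 0]) (H (@Ordinal (csize C125) 0 isT) isT) isT _ _) _);
  [sideV | sideW | rewrite /= !big_cons !big_nil /=; ring].
have E5 : 0 - gx g 1 0 + gx g 1 2 + gx g 1 5 - gx g 3 0 + gx g 3 2 + gx g 3 5 - gx g 4 0 + gx g 4 2 + gx g 4 5 = 0.
  refine (zero_eq (@key 5 g _ _ 1 (nth 0 [:: 0; 1; 0; 1; 1; 0]) (nth 0 [:: (-1); 0; 1; 0; 0; 1]) (H (@Ordinal (csize C125) 0 isT) isT) isT _ _) _);
  [sideV | sideW | rewrite /= !big_cons !big_nil /=; ring].
have E6 : 0 - gx g 0 1 + gx g 0 2 + gx g 0 3 - gx g 5 1 + gx g 5 2 + gx g 5 3 = 0.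
  refine (zero_eq (@key 5 g _ _ 2 (nth 0 [:: 1; 0; 0; 0; 0; 1]) (nth 0 [:: 0; (-1); 1; 1; 0; 0]) (H (@Ordinal (csize C125) 0 isT) isT) isT _ _) _);
  [sideV | sideW | rewrite /= !big_cons !big_nil /=; ring].
have E7 : 0 - gx g 0 1 + gx g 0 2 + gx g 0 4 - gx g 5 1 + gx g 5 2 + gx g 5 4 = 0.
  refine (zero_eq (@key 5 g _ _ 2 (nth 0 [:: 1; 0; 0; 0; 0; 1]) (nth 0 [:: 0; (-1); 1; 0; 1; 0]) (H (@Ordinal (csize C125) 0 isT) isT) isT _ _) _);
  [sideV | sideW | rewrite /= !big_cons !big_nil /=; ring].
have E8 : 0 - gx g 0 0 + gx g 0 2 + gx g 0 5 - gx g 5 0 + gx g 5 2 + gx g 5 5 = 0.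
  refine (zero_eq (@key 5 g _ _ 2 (nth 0 [:: 1; 0; 0; 0; 0; 1]) (nth 0 [:: (-1); 0; 1; 0; 0; 1]) (H (@Ordinal (csize C125) 0 isT) isT) isT _ _) _);
  [sideV | sideW | rewrite /= !big_cons !big_nil /=; ring].
have E9 : 0 + gx g 4 0 = 0.
  refine (zero_eq (@key 5 g _ _ 0 (nth 0 [:: 0; 0; 0; 0; 1; 0]) (nth 0 [:: 1; 0; 0; 0; 0; 0]) (H (@Ordinal (csize C125) 1 isT) isT) isT _ _) _);
  [sideV | sideW | rewrite /= !big_cons !big_nil /=; ring].
have E10 : 0 + gx g 4 1 = 0.
  refine (zero_eq (@key 5 g _ _ 0 (nth 0 [:: 0; 0; 0; 0; 1; 0]) (nth 0 [:: 0; 1; 0; 0; 0; 0]) (H (@Ordinal (csize C125) 1 isT) isT) isT _ _) _);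
  [sideV | sideW | rewrite /= !big_cons !big_nil /=; ring].
have E11 : 0 + gx g 4 2 = 0.
  refine (zero_eq (@key 5 g _ _ 0 (nth 0 [:: 0; 0; 0; 0; 1; 0]) (nth 0 [:: 0; 0; 1; 0; 0; 0]) (H (@Ordinal (csize C125) 1 isT) isT) isT _ _) _);
  [sideV | sideW | rewrite /= !big_cons !big_nil /=; ring].
have E12 : 0 + gx g 4 3 = 0.
  refine (zero_eq (@key 5 g _ _ 0 (nth 0 [:: 0; 0; 0; 0; 1; 0]) (nth 0 [:: 0; 0; 0; 1; 0; 0]) (H (@Ordinal (csize C125) 1 isT) isT) isT _ _) _);
  [sideV | sideW | rewrite /= !big_cons !big_nil /=; ring].
have E13 : 0 + gx g 5 0 = 0.
  refine (zero_eq (@key 5 g _ _ 1 (nth 0 [:: 0; 0; 0; 0; 0; 1]) (nth 0 [:: 1; 0; 0; 0; 0; 0]) (H (@Ordinal (csize C125) 1 isT) isT) isT _ _) _);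
  [sideV | sideW | rewrite /= !big_cons !big_nil /=; ring].
have E14 : 0 + gx g 5 1 = 0.
  refine (zero_eq (@key 5 g _ _ 1 (nth 0 [:: 0; 0; 0; 0; 0; 1]) (nth 0 [:: 0; 1; 0; 0; 0; 0]) (H (@Ordinal (csize C125) 1 isT) isT) isT _ _) _);
  [sideV | sideW | rewrite /= !big_cons !big_nil /=; ring].
have E15 : 0 + gx g 5 2 = 0.
  refine (zero_eq (@key 5 g _ _ 1 (nth 0 [:: 0; 0; 0; 0; 0; 1]) (nth 0 [:: 0; 0; 1; 0; 0; 0]) (H (@Ordinal (csize C125) 1 isT) isT) isT _ _) _);
  [sideV | sideW | rewrite /= !big_cons !big_nil /=; ring].
have E16 : 0 + gx g 5 3 = 0.
  refine (zero_eq (@key 5 g _ _ 1 (nth 0 [:: 0; 0; 0; 0; 0; 1]) (nth 0 [:: 0; 0; 0; 1; 0; 0]) (H (@Ordinal (csize C125) 1 isT) isT) isT _ _) _);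
  [sideV | sideW | rewrite /= !big_cons !big_nil /=; ring].
have E17 : 0 + gx g 0 2 = 0.
  refine (zero_eq (@key 5 g _ _ 0 (nth 0 [:: 1; 0; 0; 0; 0; 0]) (nth 0 [:: 0; 0; 1; 0; 0; 0]) (H (@Ordinal (csize C125) 2 isT) isT) isT _ _) _);
  [sideV | sideW | rewrite /= !big_cons !big_nil /=; ring].
have E18 : 0 + gx g 0 3 = 0.
  refine (zero_eq (@key 5 g _ _ 0 (nth 0 [:: 1; 0; 0; 0; 0; 0]) (nth 0 [:: 0; 0; 0; 1; 0; 0]) (H (@Ordinal (csize C125) 2 isT) isT) isT _ _) _);
  [sideV | sideW | rewrite /= !big_cons !big_nil /=; ring].
have E19 : 0 + gx g 1 2 = 0.
  refine (zero_eq (@key 5 g _ _ 1 (nth 0 [:: 0; 1; 0; 0; 0; 0]) (nth 0 [:: 0; 0; 1; 0; 0; 0]) (H (@Ordinal (csize C125) 2 isT) isT) isT _ _) _);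
  [sideV | sideW | rewrite /= !big_cons !big_nil /=; ring].
have E20 : 0 + gx g 1 3 = 0.
  refine (zero_eq (@key 5 g _ _ 1 (nth 0 [:: 0; 1; 0; 0; 0; 0]) (nth 0 [:: 0; 0; 0; 1; 0; 0]) (H (@Ordinal (csize C125) 2 isT) isT) isT _ _) _);
  [sideV | sideW | rewrite /= !big_cons !big_nil /=; ring].
have E25 : 0 + gx g 3 0 = 0.
  refine (zero_eq (@key 5 g _ _ 0 (nth 0 [:: 0; 0; 0; 1; 0; 0]) (nth 0 [:: 1; 0; 0; 0; 0; 0]) (H (@Ordinal (csize C125) 3 isT) isT) isT _ _) _);
  [sideV | sideW | rewrite /= !big_cons !big_nil /=; ring].
have E26 : 0 + gx g 3 1 = 0.
  refine (zero_eq (@key 5 g _ _ 0 (nth 0 [:: 0; 0; 0; 1; 0; 0]) (nth 0 [:: 0; 1; 0; 0; 0; 0]) (H (@Ordinal (csize C125) 3 isT) isT) isT _ _) _);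
  [sideV | sideW | rewrite /= !big_cons !big_nil /=; ring].
have E27 : 0 + gx g 3 2 = 0.
  refine (zero_eq (@key 5 g _ _ 0 (nth 0 [:: 0; 0; 0; 1; 0; 0]) (nth 0 [:: 0; 0; 1; 0; 0; 0]) (H (@Ordinal (csize C125) 3 isT) isT) isT _ _) _);
  [sideV | sideW | rewrite /= !big_cons !big_nil /=; ring].
have E28 : 0 + gx g 3 4 = 0.
  refine (zero_eq (@key 5 g _ _ 0 (nth 0 [:: 0; 0; 0; 1; 0; 0]) (nth 0 [:: 0; 0; 0; 0; 1; 0]) (H (@Ordinal (csize C125) 3 isT) isT) isT _ _) _);
  [sideV | sideW | rewrite /= !big_cons !big_nil /=; ring].
have E29 : 0 + gx g 3 5 = 0.
  refine (zero_eq (@key 5 g _ _ 0 (nth 0 [:: 0; 0; 0; 1; 0; 0]) (nth 0 [:: 0; 0; 0; 0; 0; 1]) (H (@Ordinal (csize C125) 3 isT) isT) isT _ _) _);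
  [sideV | sideW | rewrite /= !big_cons !big_nil /=; ring].
have E30 : 0 + gx g 2 0 = 0.
  refine (zero_eq (@key 5 g _ _ 0 (nth 0 [:: 0; 0; 1; 0; 0; 0]) (nth 0 [:: 1; 0; 0; 0; 0; 0]) (H (@Ordinal (csize C125) 4 isT) isT) isT _ _) _);
  [sideV | sideW | rewrite /= !big_cons !big_nil /=; ring].
have E31 : 0 + gx g 2 1 = 0.
  refine (zero_eq (@key 5 g _ _ 0 (nth 0 [:: 0; 0; 1; 0; 0; 0]) (nth 0 [:: 0; 1; 0; 0; 0; 0]) (H (@Ordinal (csize C125) 4 isT) isT) isT _ _) _);
  [sideV | sideW | rewrite /= !big_cons !big_nil /=; ring].
have E32 : 0 + gx g 2 4 = 0.
  refine (zero_eq (@key 5 g _ _ 0 (nth 0 [:: 0; 0; 1; 0; 0; 0]) (nth 0 [:: 0; 0; 0; 0; 1; 0]) (H (@Ordinal (csize C125) 4 isT) isT) isT _ _) _);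
  [sideV | sideW | rewrite /= !big_cons !big_nil /=; ring].
have E33 : 0 + gx g 2 5 = 0.
  refine (zero_eq (@key 5 g _ _ 0 (nth 0 [:: 0; 0; 1; 0; 0; 0]) (nth 0 [:: 0; 0; 0; 0; 0; 1]) (H (@Ordinal (csize C125) 4 isT) isT) isT _ _) _);
  [sideV | sideW | rewrite /= !big_cons !big_nil /=; ring].
have E38 : 0 + gx g 1 0 = 0.
  refine (zero_eq (@key 5 g _ _ 0 (nth 0 [:: 0; 1; 0; 0; 0; 0]) (nth 0 [:: 1; 0; 0; 0; 0; 0]) (H (@Ordinal (csize C125) 5 isT) isT) isT _ _) _);
  [sideV | sideW | rewrite /= !big_cons !big_nil /=; ring].
have E39 : 0 + gx g 1 4 = 0.
  refine (zero_eq (@key 5 g _ _ 0 (nth 0 [:: 0; 1; 0; 0; 0; 0]) (nth 0 [:: 0; 0; 0; 0; 1; 0]) (H (@Ordinal (csize C125) 5 isT) isT) isT _ _) _);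
  [sideV | sideW | rewrite /= !big_cons !big_nil /=; ring].
have E40 : 0 + gx g 1 5 = 0.
  refine (zero_eq (@key 5 g _ _ 0 (nth 0 [:: 0; 1; 0; 0; 0; 0]) (nth 0 [:: 0; 0; 0; 0; 0; 1]) (H (@Ordinal (csize C125) 5 isT) isT) isT _ _) _);
  [sideV | sideW | rewrite /= !big_cons !big_nil /=; ring].
have E47 : 0 + gx g 0 4 = 0.
  refine (zero_eq (@key 5 g _ _ 0 (nth 0 [:: 1; 0; 0; 0; 0; 0]) (nth 0 [:: 0; 0; 0; 0; 1; 0]) (H (@Ordinal (csize C125) 6 isT) isT) isT _ _) _);
  [sideV | sideW | rewrite /= !big_cons !big_nil /=; ring].
have E48 : 0 + gx g 0 5 = 0.
  refine (zero_eq (@key 5 g _ _ 0 (nth 0 [:: 1; 0; 0; 0; 0; 0]) (nth 0 [:: 0; 0; 0; 0; 0; 1]) (H (@Ordinal (csize C125) 6 isT) isT) isT _ _) _);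
  [sideV | sideW | rewrite /= !big_cons !big_nil /=; ring].
have F01 : gx g 0 1 = 0.
  apply/subr0_eq; apply: (@step (-1) _ _ E6); apply: (@step (-1) _ _ E14); apply: (@step 1 _ _ E15); apply: (@step 1 _ _ E16); apply: (@step 1 _ _ E17); apply: (@step 1 _ _ E18); ring.
have F02 : gx g 0 2 = 0.
  apply/subr0_eq; apply: (@step 1 _ _ E17); ring.
have F03 : gx g 0 3 = 0.
  apply/subr0_eq; apply: (@step 1 _ _ E18); ring.
have F04 : gx g 0 4 = 0.
  apply/subr0_eq; apply: (@step 1 _ _ E47); ring.
have F05 : gx g 0 5 = 0.
  apply/subr0_eq; apply: (@step 1 _ _ E48); ring.
have F10 : gx g 1 0 = 0.
  apply/subr0_eq; apply: (@step 1 _ _ E38); ring.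
have F12 : gx g 1 2 = 0.
  apply/subr0_eq; apply: (@step 1 _ _ E19); ring.
have F13 : gx g 1 3 = 0.
  apply/subr0_eq; apply: (@step 1 _ _ E20); ring.
have F14 : gx g 1 4 = 0.
  apply/subr0_eq; apply: (@step 1 _ _ E39); ring.
have F15 : gx g 1 5 = 0.
  apply/subr0_eq; apply: (@step 1 _ _ E40); ring.
have F20 : gx g 2 0 = 0.
  apply/subr0_eq; apply: (@step 1 _ _ E30); ring.
have F21 : gx g 2 1 = 0.
  apply/subr0_eq; apply: (@step 1 _ _ E31); ring.
have F23 : gx g 2 3 = 0.
  apply/subr0_eq; apply: (@step 1 _ _ E0); apply: (@step (-1) _ _ E1); apply: (@step (-1) _ _ E18); apply: (@step (-1) _ _ E20); apply: (@step 1 _ _ E32); apply: (@step 1 _ _ E39); apply: (@step 1 _ _ E47); ring.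
have F24 : gx g 2 4 = 0.
  apply/subr0_eq; apply: (@step 1 _ _ E32); ring.
have F25 : gx g 2 5 = 0.
  apply/subr0_eq; apply: (@step 1 _ _ E33); ring.
have F30 : gx g 3 0 = 0.
  apply/subr0_eq; apply: (@step 1 _ _ E25); ring.
have F31 : gx g 3 1 = 0.
  apply/subr0_eq; apply: (@step 1 _ _ E26); ring.
have F32 : gx g 3 2 = 0.
  apply/subr0_eq; apply: (@step 1 _ _ E27); ring.
have F34 : gx g 3 4 = 0.
  apply/subr0_eq; apply: (@step 1 _ _ E28); ring.
have F35 : gx g 3 5 = 0.
  apply/subr0_eq; apply: (@step 1 _ _ E29); ring.
have F40 : gx g 4 0 = 0.
  apply/subr0_eq; apply: (@step 1 _ _ E9); ring.
have F41 : gx g 4 1 = 0.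
  apply/subr0_eq; apply: (@step 1 _ _ E10); ring.
have F42 : gx g 4 2 = 0.
  apply/subr0_eq; apply: (@step 1 _ _ E11); ring.
have F43 : gx g 4 3 = 0.
  apply/subr0_eq; apply: (@step 1 _ _ E12); ring.
have F45 : gx g 4 5 = 0.
  apply/subr0_eq; apply: (@step 1 _ _ E5); apply: (@step 1 _ _ E9); apply: (@step (-1) _ _ E11); apply: (@step (-1) _ _ E19); apply: (@step 1 _ _ E25); apply: (@step (-1) _ _ E27); apply: (@step (-1) _ _ E29); apply: (@step 1 _ _ E38); apply: (@step (-1) _ _ E40); ring.
have F50 : gx g 5 0 = 0.
  apply/subr0_eq; apply: (@step 1 _ _ E13); ring.
have F51 : gx g 5 1 = 0.
  apply/subr0_eq; apply: (@step 1 _ _ E14); ring.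
have F52 : gx g 5 2 = 0.
  apply/subr0_eq; apply: (@step 1 _ _ E15); ring.
have F53 : gx g 5 3 = 0.
  apply/subr0_eq; apply: (@step 1 _ _ E16); ring.
have F54 : gx g 5 4 = 0.
  apply/subr0_eq; apply: (@step (-1) _ _ E6); apply: (@step 1 _ _ E7); apply: (@step 1 _ _ E16); apply: (@step 1 _ _ E18); apply: (@step (-1) _ _ E47); ring.
have F11 : gx g 1 1 - gx g 0 0 = 0.
  apply/subr0_eq; apply: (@step (-1) _ _ E1); apply: (@step 1 _ _ E2); apply: (@step 1 _ _ E6); apply: (@step 1 _ _ E14); apply: (@step (-1) _ _ E15); apply: (@step (-1) _ _ E16); apply: (@step (-1) _ _ E17); apply: (@step (-1) _ _ E18); apply: (@step 1 _ _ E30); apply: (@step (-1) _ _ E31); apply: (@step 1 _ _ E32); apply: (@step (-1) _ _ E33); apply: (@step 1 _ _ E38); apply: (@step 1 _ _ E39); apply: (@step (-1) _ _ E40); apply: (@step 1 _ _ E47); apply: (@step (-1) _ _ E48); ring.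
have G1 : gx g 1 1 = gx g 0 0 by apply/subr0_eq.
have F22 : gx g 2 2 - gx g 0 0 = 0.
  apply/subr0_eq; apply: (@step 1 _ _ E2); apply: (@step (-1) _ _ E17); apply: (@step (-1) _ _ E19); apply: (@step 1 _ _ E30); apply: (@step (-1) _ _ E33); apply: (@step 1 _ _ E38); apply: (@step (-1) _ _ E40); apply: (@step (-1) _ _ E48); ring.
have G2 : gx g 2 2 = gx g 0 0 by apply/subr0_eq.
have F33 : gx g 3 3 - gx g 0 0 = 0.
  apply/subr0_eq; apply: (@step (-1) _ _ E1); apply: (@step 1 _ _ E2); apply: (@step 1 _ _ E3); apply: (@step 1 _ _ E6); apply: (@step 1 _ _ E10); apply: (@step (-1) _ _ E11); apply: (@step (-1) _ _ E12); apply: (@step 1 _ _ E14); apply: (@step (-1) _ _ E15); apply: (@step (-1) _ _ E16); apply: (@step (-1) _ _ E17); apply: (@step (-1) _ _ E18); apply: (@step (-1) _ _ E19); apply: (@step (-1) _ _ E20); apply: (@step 1 _ _ E26); apply: (@step (-1) _ _ E27); apply: (@step 1 _ _ E30); apply: (@step (-1) _ _ E31); apply: (@step 1 _ _ E32); apply: (@step (-1) _ _ E33); apply: (@step 1 _ _ E38); apply: (@step 1 _ _ E39); apply: (@step (-1) _ _ E40); apply: (@step 1 _ _ E47); apply: (@step (-1) _ _ E48); ring.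
have G3 : gx g 3 3 = gx g 0 0 by apply/subr0_eq.
have F44 : gx g 4 4 - gx g 0 0 = 0.
  apply/subr0_eq; apply: (@step (-1) _ _ E1); apply: (@step 1 _ _ E2); apply: (@step 1 _ _ E4); apply: (@step 1 _ _ E6); apply: (@step 1 _ _ E10); apply: (@step (-1) _ _ E11); apply: (@step 1 _ _ E14); apply: (@step (-1) _ _ E15); apply: (@step (-1) _ _ E16); apply: (@step (-1) _ _ E17); apply: (@step (-1) _ _ E18); apply: (@step (-1) _ _ E19); apply: (@step 1 _ _ E26); apply: (@step (-1) _ _ E27); apply: (@step (-1) _ _ E28); apply: (@step 1 _ _ E30); apply: (@step (-1) _ _ E31); apply: (@step 1 _ _ E32); apply: (@step (-1) _ _ E33); apply: (@step 1 _ _ E38); apply: (@step (-1) _ _ E40); apply: (@step 1 _ _ E47); apply: (@step (-1) _ _ E48); ring.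
have G4 : gx g 4 4 = gx g 0 0 by apply/subr0_eq.
have F55 : gx g 5 5 - gx g 0 0 = 0.
  apply/subr0_eq; apply: (@step 1 _ _ E8); apply: (@step 1 _ _ E13); apply: (@step (-1) _ _ E15); apply: (@step (-1) _ _ E17); apply: (@step (-1) _ _ E48); ring.
have G5 : gx g 5 5 = gx g 0 0 by apply/subr0_eq.
move=> i Hi j Hj.
case: i Hi => [|[|[|[|[|[|i]]]]]] Hi; last by move: Hi; rewrite !ltnS ltn0.
all: case: j Hj => [|[|[|[|[|[|j]]]]]] Hj; try by move: Hj; rewrite !ltnS ltn0.
all: rewrite /= ?F01 ?F02 ?F03 ?F04 ?F05 ?F10 ?F12 ?F13 ?F14 ?F15 ?F20 ?F21 ?F23 ?F24 ?F25 ?F30 ?F31 ?F32 ?F34 ?F35 ?F40 ?F41 ?F42 ?F43 ?F45 ?F50 ?F51 ?F52 ?F53 ?F54 ?G1 ?G2 ?G3 ?G4 ?G5; ring.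
Qed.

Lemma neq125 (l m : C) (g : 'M[C]_6) : l != m -> g \in unitmx ->
  (forall i : 'I_(csize C125), (critV C125 l i *m g <= critV C125 m i)%MS) -> False.
Proof.
move=> lm gu H.
have [c Pc] : exists c, forall i, (i < 6)%N -> forall j, (j < 6)%N -> gx g i j = (i == j)%:R * c.
  by exists (gx g 0 0); apply: (pres125 (l := l) (m := m)) => i _; exact: H.
have E : c * (m - l) = 0.
  refine (zero_eq (@key 5 g _ _ 4 (nth 0 [:: 0; 0; 0; 0; 1; l]) (nth 0 [:: 0; 0; 0; 0; m; -1]) (H (@Ordinal (csize C125) (ca C125) isT)) isT _ _) _);
  [sideV | sideW | rewrite /= !big_cons !big_nil /= !Pc //=; ring].
exact: (final lm gu Pc E).
Qed.

Lemma presN4 (l m : C) (g : 'M[C]_5) :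
  (forall i : 'I_(csize CN4), (i : nat) != ca CN4 -> (critV CN4 l i *m g <= critV CN4 m i)%MS) ->
  forall i, (i < 5)%N -> forall j, (j < 5)%N -> gx g i j = (i == j)%:R * gx g 0 0.
Proof.
move=> H.
have E0 : 0 + gx g 3 0 = 0.
  refine (zero_eq (@key 4 g _ _ 0 (nth 0 [:: 0; 0; 0; 1; 0]) (nth 0 [:: 1; 0; 0; 0; 0]) (H (@Ordinal (csize CN4) 0 isT) isT) isT _ _) _);
  [sideV | sideW | rewrite /= !big_cons !big_nil /=; ring].
have E1 : 0 + gx g 3 1 = 0.
  refine (zero_eq (@key 4 g _ _ 0 (nth 0 [:: 0; 0; 0; 1; 0]) (nth 0 [:: 0; 1; 0; 0; 0]) (H (@Ordinal (csize CN4) 0 isT) isT) isT _ _) _);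
  [sideV | sideW | rewrite /= !big_cons !big_nil /=; ring].
have E2 : 0 + gx g 3 2 = 0.
  refine (zero_eq (@key 4 g _ _ 0 (nth 0 [:: 0; 0; 0; 1; 0]) (nth 0 [:: 0; 0; 1; 0; 0]) (H (@Ordinal (csize CN4) 0 isT) isT) isT _ _) _);
  [sideV | sideW | rewrite /= !big_cons !big_nil /=; ring].
have E3 : 0 + gx g 3 4 = 0.
  refine (zero_eq (@key 4 g _ _ 0 (nth 0 [:: 0; 0; 0; 1; 0]) (nth 0 [:: 0; 0; 0; 0; 1]) (H (@Ordinal (csize CN4) 0 isT) isT) isT _ _) _);
  [sideV | sideW | rewrite /= !big_cons !big_nil /=; ring].
have E4 : 0 + gx g 2 0 = 0.
  refine (zero_eq (@key 4 g _ _ 0 (nth 0 [:: 0; 0; 1; 0; 0]) (nth 0 [:: 1; 0; 0; 0; 0]) (H (@Ordinal (csize CN4) 1 isT) isT) isT _ _) _);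
  [sideV | sideW | rewrite /= !big_cons !big_nil /=; ring].
have E5 : 0 + gx g 2 1 = 0.
  refine (zero_eq (@key 4 g _ _ 0 (nth 0 [:: 0; 0; 1; 0; 0]) (nth 0 [:: 0; 1; 0; 0; 0]) (H (@Ordinal (csize CN4) 1 isT) isT) isT _ _) _);
  [sideV | sideW | rewrite /= !big_cons !big_nil /=; ring].
have E6 : 0 + gx g 2 4 = 0.
  refine (zero_eq (@key 4 g _ _ 0 (nth 0 [:: 0; 0; 1; 0; 0]) (nth 0 [:: 0; 0; 0; 0; 1]) (H (@Ordinal (csize CN4) 1 isT) isT) isT _ _) _);
  [sideV | sideW | rewrite /= !big_cons !big_nil /=; ring].
have E10 : 0 + gx g 1 0 = 0.
  refine (zero_eq (@key 4 g _ _ 0 (nth 0 [:: 0; 1; 0; 0; 0]) (nth 0 [:: 1; 0; 0; 0; 0]) (H (@Ordinal (csize CN4) 2 isT) isT) isT _ _) _);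
  [sideV | sideW | rewrite /= !big_cons !big_nil /=; ring].
have E11 : 0 + gx g 1 4 = 0.
  refine (zero_eq (@key 4 g _ _ 0 (nth 0 [:: 0; 1; 0; 0; 0]) (nth 0 [:: 0; 0; 0; 0; 1]) (H (@Ordinal (csize CN4) 2 isT) isT) isT _ _) _);
  [sideV | sideW | rewrite /= !big_cons !big_nil /=; ring].
have E16 : 0 + gx g 0 4 = 0.
  refine (zero_eq (@key 4 g _ _ 0 (nth 0 [:: 1; 0; 0; 0; 0]) (nth 0 [:: 0; 0; 0; 0; 1]) (H (@Ordinal (csize CN4) 3 isT) isT) isT _ _) _);
  [sideV | sideW | rewrite /= !big_cons !big_nil /=; ring].
have E20 : 0 - gx g 1 0 - gx g 1 1 + gx g 1 2 - gx g 2 0 - gx g 2 1 + gx g 2 2 - gx g 4 0 - gx g 4 1 + gx g 4 2 = 0.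
  refine (zero_eq (@key 4 g _ _ 0 (nth 0 [:: 0; 1; 1; 0; 1]) (nth 0 [:: (-1); (-1); 1; 0; 0]) (H (@Ordinal (csize CN4) 4 isT) isT) isT _ _) _);
  [sideV | sideW | rewrite /= !big_cons !big_nil /=; ring].
have E21 : 0 - gx g 1 0 + gx g 1 3 - gx g 2 0 + gx g 2 3 - gx g 4 0 + gx g 4 3 = 0.
  refine (zero_eq (@key 4 g _ _ 0 (nth 0 [:: 0; 1; 1; 0; 1]) (nth 0 [:: (-1); 0; 0; 1; 0]) (H (@Ordinal (csize CN4) 4 isT) isT) isT _ _) _);
  [sideV | sideW | rewrite /= !big_cons !big_nil /=; ring].
have E22 : 0 - gx g 1 1 + gx g 1 4 - gx g 2 1 + gx g 2 4 - gx g 4 1 + gx g 4 4 = 0.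
  refine (zero_eq (@key 4 g _ _ 0 (nth 0 [:: 0; 1; 1; 0; 1]) (nth 0 [:: 0; (-1); 0; 0; 1]) (H (@Ordinal (csize CN4) 4 isT) isT) isT _ _) _);
  [sideV | sideW | rewrite /= !big_cons !big_nil /=; ring].
have E23 : 0 - gx g 0 0 - gx g 0 1 + gx g 0 2 - gx g 2 0 - gx g 2 1 + gx g 2 2 - gx g 3 0 - gx g 3 1 + gx g 3 2 = 0.
  refine (zero_eq (@key 4 g _ _ 1 (nth 0 [:: 1; 0; 1; 1; 0]) (nth 0 [:: (-1); (-1); 1; 0; 0]) (H (@Ordinal (csize CN4) 4 isT) isT) isT _ _) _);
  [sideV | sideW | rewrite /= !big_cons !big_nil /=; ring].
have E24 : 0 - gx g 0 0 + gx g 0 3 - gx g 2 0 + gx g 2 3 - gx g 3 0 + gx g 3 3 = 0.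
  refine (zero_eq (@key 4 g _ _ 1 (nth 0 [:: 1; 0; 1; 1; 0]) (nth 0 [:: (-1); 0; 0; 1; 0]) (H (@Ordinal (csize CN4) 4 isT) isT) isT _ _) _);
  [sideV | sideW | rewrite /= !big_cons !big_nil /=; ring].
have E25 : 0 - gx g 0 1 + gx g 0 4 - gx g 2 1 + gx g 2 4 - gx g 3 1 + gx g 3 4 = 0.
  refine (zero_eq (@key 4 g _ _ 1 (nth 0 [:: 1; 0; 1; 1; 0]) (nth 0 [:: 0; (-1); 0; 0; 1]) (H (@Ordinal (csize CN4) 4 isT) isT) isT _ _) _);
  [sideV | sideW | rewrite /= !big_cons !big_nil /=; ring].
have E26 : 0 + gx g 4 0 = 0.
  refine (zero_eq (@key 4 g _ _ 0 (nth 0 [:: 0; 0; 0; 0; 1]) (nth 0 [:: 1; 0; 0; 0; 0]) (H (@Ordinal (csize CN4) 5 isT) isT) isT _ _) _);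
  [sideV | sideW | rewrite /= !big_cons !big_nil /=; ring].
have E27 : 0 + gx g 4 1 = 0.
  refine (zero_eq (@key 4 g _ _ 0 (nth 0 [:: 0; 0; 0; 0; 1]) (nth 0 [:: 0; 1; 0; 0; 0]) (H (@Ordinal (csize CN4) 5 isT) isT) isT _ _) _);
  [sideV | sideW | rewrite /= !big_cons !big_nil /=; ring].
have E28 : 0 + gx g 4 2 = 0.
  refine (zero_eq (@key 4 g _ _ 0 (nth 0 [:: 0; 0; 0; 0; 1]) (nth 0 [:: 0; 0; 1; 0; 0]) (H (@Ordinal (csize CN4) 5 isT) isT) isT _ _) _);
  [sideV | sideW | rewrite /= !big_cons !big_nil /=; ring].
have E29 : 0 + gx g 4 3 = 0.
  refine (zero_eq (@key 4 g _ _ 0 (nth 0 [:: 0; 0; 0; 0; 1]) (nth 0 [:: 0; 0; 0; 1; 0]) (H (@Ordinal (csize CN4) 5 isT) isT) isT _ _) _);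
  [sideV | sideW | rewrite /= !big_cons !big_nil /=; ring].
have E30 : 0 + gx g 0 2 = 0.
  refine (zero_eq (@key 4 g _ _ 0 (nth 0 [:: 1; 0; 0; 0; 0]) (nth 0 [:: 0; 0; 1; 0; 0]) (H (@Ordinal (csize CN4) 7 isT) isT) isT _ _) _);
  [sideV | sideW | rewrite /= !big_cons !big_nil /=; ring].
have E31 : 0 + gx g 0 3 = 0.
  refine (zero_eq (@key 4 g _ _ 0 (nth 0 [:: 1; 0; 0; 0; 0]) (nth 0 [:: 0; 0; 0; 1; 0]) (H (@Ordinal (csize CN4) 7 isT) isT) isT _ _) _);
  [sideV | sideW | rewrite /= !big_cons !big_nil /=; ring].
have E32 : 0 + gx g 1 2 = 0.
  refine (zero_eq (@key 4 g _ _ 1 (nth 0 [:: 0; 1; 0; 0; 0]) (nth 0 [:: 0; 0; 1; 0; 0]) (H (@Ordinal (csize CN4) 7 isT) isT) isT _ _) _);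
  [sideV | sideW | rewrite /= !big_cons !big_nil /=; ring].
have E33 : 0 + gx g 1 3 = 0.
  refine (zero_eq (@key 4 g _ _ 1 (nth 0 [:: 0; 1; 0; 0; 0]) (nth 0 [:: 0; 0; 0; 1; 0]) (H (@Ordinal (csize CN4) 7 isT) isT) isT _ _) _);
  [sideV | sideW | rewrite /= !big_cons !big_nil /=; ring].
have F01 : gx g 0 1 = 0.
  apply/subr0_eq; apply: (@step (-1) _ _ E1); apply: (@step 1 _ _ E3); apply: (@step (-1) _ _ E5); apply: (@step 1 _ _ E6); apply: (@step 1 _ _ E16); apply: (@step (-1) _ _ E25); ring.
have F02 : gx g 0 2 = 0.
  apply/subr0_eq; apply: (@step 1 _ _ E30); ring.
have F03 : gx g 0 3 = 0.
  apply/subr0_eq; apply: (@step 1 _ _ E31); ring.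
have F04 : gx g 0 4 = 0.
  apply/subr0_eq; apply: (@step 1 _ _ E16); ring.
have F10 : gx g 1 0 = 0.
  apply/subr0_eq; apply: (@step 1 _ _ E10); ring.
have F12 : gx g 1 2 = 0.
  apply/subr0_eq; apply: (@step 1 _ _ E32); ring.
have F13 : gx g 1 3 = 0.
  apply/subr0_eq; apply: (@step 1 _ _ E33); ring.
have F14 : gx g 1 4 = 0.
  apply/subr0_eq; apply: (@step 1 _ _ E11); ring.
have F20 : gx g 2 0 = 0.
  apply/subr0_eq; apply: (@step 1 _ _ E4); ring.
have F21 : gx g 2 1 = 0.
  apply/subr0_eq; apply: (@step 1 _ _ E5); ring.
have F23 : gx g 2 3 = 0.
  apply/subr0_eq; apply: (@step 1 _ _ E4); apply: (@step 1 _ _ E10); apply: (@step 1 _ _ E21); apply: (@step 1 _ _ E26); apply: (@step (-1) _ _ E29); apply: (@step (-1) _ _ E33); ring.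
have F24 : gx g 2 4 = 0.
  apply/subr0_eq; apply: (@step 1 _ _ E6); ring.
have F30 : gx g 3 0 = 0.
  apply/subr0_eq; apply: (@step 1 _ _ E0); ring.
have F31 : gx g 3 1 = 0.
  apply/subr0_eq; apply: (@step 1 _ _ E1); ring.
have F32 : gx g 3 2 = 0.
  apply/subr0_eq; apply: (@step 1 _ _ E2); ring.
have F34 : gx g 3 4 = 0.
  apply/subr0_eq; apply: (@step 1 _ _ E3); ring.
have F40 : gx g 4 0 = 0.
  apply/subr0_eq; apply: (@step 1 _ _ E26); ring.
have F41 : gx g 4 1 = 0.
  apply/subr0_eq; apply: (@step 1 _ _ E27); ring.
have F42 : gx g 4 2 = 0.
  apply/subr0_eq; apply: (@step 1 _ _ E28); ring.
have F43 : gx g 4 3 = 0.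
  apply/subr0_eq; apply: (@step 1 _ _ E29); ring.
have F11 : gx g 1 1 - gx g 0 0 = 0.
  apply/subr0_eq; apply: (@step 1 _ _ E0); apply: (@step (-1) _ _ E2); apply: (@step 1 _ _ E3); apply: (@step (-1) _ _ E5); apply: (@step 1 _ _ E6); apply: (@step (-1) _ _ E10); apply: (@step 1 _ _ E16); apply: (@step (-1) _ _ E20); apply: (@step 1 _ _ E23); apply: (@step (-1) _ _ E25); apply: (@step (-1) _ _ E26); apply: (@step (-1) _ _ E27); apply: (@step 1 _ _ E28); apply: (@step (-1) _ _ E30); apply: (@step 1 _ _ E32); ring.
have G1 : gx g 1 1 = gx g 0 0 by apply/subr0_eq.
have F22 : gx g 2 2 - gx g 0 0 = 0.
  apply/subr0_eq; apply: (@step 1 _ _ E0); apply: (@step (-1) _ _ E2); apply: (@step 1 _ _ E3); apply: (@step 1 _ _ E4); apply: (@step 1 _ _ E6); apply: (@step 1 _ _ E16); apply: (@step 1 _ _ E23); apply: (@step (-1) _ _ E25); apply: (@step (-1) _ _ E30); ring.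
have G2 : gx g 2 2 = gx g 0 0 by apply/subr0_eq.
have F33 : gx g 3 3 - gx g 0 0 = 0.
  apply/subr0_eq; apply: (@step 1 _ _ E0); apply: (@step (-1) _ _ E10); apply: (@step (-1) _ _ E21); apply: (@step 1 _ _ E24); apply: (@step (-1) _ _ E26); apply: (@step 1 _ _ E29); apply: (@step (-1) _ _ E31); apply: (@step 1 _ _ E33); ring.
have G3 : gx g 3 3 = gx g 0 0 by apply/subr0_eq.
have F44 : gx g 4 4 - gx g 0 0 = 0.
  apply/subr0_eq; apply: (@step 1 _ _ E0); apply: (@step (-1) _ _ E2); apply: (@step 1 _ _ E3); apply: (@step (-1) _ _ E10); apply: (@step (-1) _ _ E11); apply: (@step 1 _ _ E16); apply: (@step (-1) _ _ E20); apply: (@step 1 _ _ E22); apply: (@step 1 _ _ E23); apply: (@step (-1) _ _ E25); apply: (@step (-1) _ _ E26); apply: (@step 1 _ _ E28); apply: (@step (-1) _ _ E30); apply: (@step 1 _ _ E32); ring.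
have G4 : gx g 4 4 = gx g 0 0 by apply/subr0_eq.
move=> i Hi j Hj.
case: i Hi => [|[|[|[|[|i]]]]] Hi; last by move: Hi; rewrite !ltnS ltn0.
all: case: j Hj => [|[|[|[|[|j]]]]] Hj; try by move: Hj; rewrite !ltnS ltn0.
all: rewrite /= ?F01 ?F02 ?F03 ?F04 ?F10 ?F12 ?F13 ?F14 ?F20 ?F21 ?F23 ?F24 ?F30 ?F31 ?F32 ?F34 ?F40 ?F41 ?F42 ?F43 ?G1 ?G2 ?G3 ?G4; ring.
Qed.

Lemma neqN4 (l m : C) (g : 'M[C]_5) : l != m -> g \in unitmx ->
  (forall i : 'I_(csize CN4), (critV CN4 l i *m g <= critV CN4 m i)%MS) -> False.
Proof.
move=> lm gu H.
have [c Pc] : exists c, forall i, (i < 5)%N -> forall j, (j < 5)%N -> gx g i j = (i == j)%:R * c.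
  by exists (gx g 0 0); apply: (presN4 (l := l) (m := m)) => i _; exact: H.
have E : c * (m - l) = 0.
  refine (zero_eq (@key 4 g _ _ 3 (nth 0 [:: 0; 0; 1; l; 0]) (nth 0 [:: 1 - m; - m; m; -1; 0]) (H (@Ordinal (csize CN4) (ca CN4) isT)) isT _ _) _);
  [sideV | sideW | rewrite /= !big_cons !big_nil /= !Pc //=; ring].
exact: (final lm gu Pc E).
Qed.

End S.

Theorem proposition1 (R : realType) :
  (forall (S : critical) (l m : R[i]), l != m ->
     ~ rep_equiv (critV S l) (critV S m)) /\
  (forall (S : critical) (l : R[i]), schurian (critVa S l)).
Proof.
split.
- move=> S l m lm [g [fr fu H]].
  have gu : g \in unitmx by rewrite -row_full_unit.
  have H' : forall i, (critV S l i *m g <= critV S m i)%MS by move=> i; case/andP: (H i).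
  case: S l m lm g fr fu H gu H' => l m lm g _ _ _ gu H'.
  + exact: (neq1111 lm gu H').
  + exact: (neq222 lm gu H').
  + exact: (neq133 lm gu H').
  + exact: (neq125 lm gu H').
  + exact: (neqN4 lm gu H').
- move=> S l g; split; last by case=> c ->; move=> i; apply: stablemxC.
  case: S l g => l g H; exists (gx g 0 0); apply: scal_of.
  + by apply: (pres1111 (l := l) (m := l)) => i Hi; exact: (H (exist _ i Hi)).
  + by apply: (pres222 (l := l) (m := l)) => i Hi; exact: (H (exist _ i Hi)).
  + by apply: (pres133 (l := l) (m := l)) => i Hi; exact: (H (exist _ i Hi)).
  + by apply: (pres125 (l := l) (m := l)) => i Hi; exact: (H (exist _ i Hi)).
  + by apply: (presN4 (l := l) (m := l)) => i Hi; exact: (H (exist _ i Hi)).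
Qed.
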